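(* Let $0<\theta_1<\dots<\theta_n<2\pi$ and set $\theta_{j+n}=\theta_j+2\pi$. For $A\subset\mathbb{R}$ write $A\ (\mathrm{mod}\ 2\pi)=\{x+2\pi m: x\in A, m\in\mathbb{Z}\}\cap[0,2\pi)$; for $a\in(0,2\pi)$ put $I(x,a)=[x,x+a]\ (\mathrm{mod}\ 2\pi)$ and, for $1\le j\le n$, $J_j(a)=\{x\in[0,2\pi): I(x,a)\subset(\theta_j,\theta_{j+1})\ (\mathrm{mod}\ 2\pi)\}$. For $a_1,\dots,a_k\in(0,2\pi)$ let $$\Sigma_k(a_1,\dots,a_k)=\bigcup_{i_1,\dots,i_k\in\{1,\dots,n\}\text{ all distinct}}\ \prod_{j=1}^kJ_{i_j}(a_j)\subset[0,2\pi)^k.$$ Then for $(y_1,\dots,y_k)\in[0,2\pi)^k$, $(y_1,\dots,y_k)\in\Sigma_k(a_1,\dots,a_k)$ holds if and only if all of the following hold: (i) $I(y_l,a_l)\cap I(y_j,a_j)=\emptyset$ for $1\le l<j\le k$; (ii) $\theta_l\notin I(y_j,a_j)$ for all $1\le j\le k$, $1\le l\le n$; (iii) for all $p,q\in\{1,\dots,k\}$ with $y_p<y_q$, $\{\theta_1,\dots,\theta_n\}\cap(y_p,y_q)\ne\emptyset$ and $\{\theta_1,\dots,\theta_n\}\setminus[y_p,y_q]\neq\emptyset$. *)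

(* Defs.v *)
From Stdlib Require Import Reals Lra Lia ZArith Arith.
Open Scope R_scope.

Definition mod2pi (A : R -> Prop) : R -> Prop :=
  fun y => (exists x (m : Z), A x /\ y = x + 2 * PI * IZR m) /\ 0 <= y < 2 * PI.

Definition Iarc (x a : R) : R -> Prop := mod2pi (fun t => x <= t <= x + a).

(* theta is indexed 1..n; theta_{j+n} = theta_j + 2 pi *)
Definition theta_ext (n : nat) (theta : nat -> R) (j : nat) : R :=
  if (j <=? n)%nat then theta j else theta (j - n)%nat + 2 * PI.

Definition Jset (n : nat) (theta : nat -> R) (j : nat) (a : R) : R -> Prop :=
  fun x => 0 <= x < 2 * PI /\
    forall t, Iarc x a t ->
      mod2pi (fun s => theta_ext n theta j < s < theta_ext n theta (j + 1)) t.

Definition Sigma (n : nat) (theta : nat -> R) (k : nat) (a y : nat -> R) : Prop :=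
  exists i : nat -> nat,
    (forall j, (1 <= j <= k)%nat -> (1 <= i j <= n)%nat) /\
    (forall j l, (1 <= j <= k)%nat -> (1 <= l <= k)%nat -> j <> l -> i j <> i l) /\
    (forall j, (1 <= j <= k)%nat -> Jset n theta (i j) (a j) (y j)).

(* Main.v *)
Require Import Defs.
From Stdlib Require Import Reals Lra Lia ZArith Arith.
From Stdlib Require Import ClassicalEpsilon.
Open Scope R_scope.

Definition Good (n : nat) (th : nat -> R) : Prop :=
  (1 <= n)%nat /\ 0 < th 1%nat /\ (forall j, (1 <= j < n)%nat -> th j < th (S j))
  /\ th n < 2 * PI.

Definition G (n : nat) (th : nat -> R) (i : nat) (t : R) : Prop :=
  ((i < n)%nat /\ th i < t < th (S i)) \/ (i = n /\ (th n < t \/ t < th 1%nat)).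

Lemma th_lt n th : Good n th -> forall j i, (1 <= i)%nat -> (i < j)%nat -> (j <= n)%nat ->
  th i < th j.
Proof.
  intros [H1 [H2 [H3 H4]]]. induction j; intros i Hi Hij Hj; [lia|].
  destruct (Nat.eq_dec i j) as [->|Hne].
  - apply H3; lia.
  - apply Rlt_trans with (th j). apply IHj; lia. apply H3; lia.
Qed.

Lemma th_le n th : Good n th -> forall i j, (1 <= i)%nat -> (i <= j)%nat -> (j <= n)%nat ->
  th i <= th j.
Proof.
  intros HG i j Hi Hij Hj. destruct (Nat.eq_dec i j) as [->|Hne]. lra.
  left; apply (th_lt n th HG); lia.
Qed.

Lemma th_bnd n th : Good n th -> forall i, (1 <= i <= n)%nat -> 0 < th i < 2 * PI.
Proof.
  intros HG i Hi. pose proof HG as [H1 [H2 [H3 H4]]].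
  pose proof (th_le n th HG 1 i ltac:(lia) ltac:(lia) ltac:(lia)).
  pose proof (th_le n th HG i n ltac:(lia) ltac:(lia) ltac:(lia)). lra.
Qed.

Lemma text_i n th i : (i <= n)%nat -> theta_ext n th i = th i.
Proof. intros H. unfold theta_ext. apply Nat.leb_le in H. now rewrite H. Qed.

Lemma text_n1 n th : theta_ext n th (n + 1) = th 1%nat + 2 * PI.
Proof.
  unfold theta_ext. replace ((n + 1) <=? n)%nat with false.
  replace (n + 1 - n)%nat with 1%nat by lia. reflexivity.
  symmetry. apply Nat.leb_gt. lia.
Qed.

Lemma gap_iff n th i t : Good n th -> (1 <= i <= n)%nat -> 0 <= t < 2 * PI ->
  (mod2pi (fun s => theta_ext n th i < s < theta_ext n th (i + 1)) t <-> G n th i t).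
Proof.
  intros HG Hi Ht. pose proof PI_RGT_0 as Hpi.
  pose proof (th_bnd n th HG) as Hb.
  destruct (Nat.eq_dec i n) as [->|Hne].
  - rewrite text_i by lia. rewrite text_n1. split.
    + intros [[x [m [Hx ->]]] _]. right. split; [reflexivity|].
      pose proof (Hb n ltac:(lia)). pose proof (Hb 1%nat ltac:(lia)).
      assert (IZR m < 1).
      { apply Rmult_lt_reg_l with (2 * PI). lra. lra. }
      assert (-2 < IZR m).
      { apply Rmult_lt_reg_l with (2 * PI). lra. lra. }
      apply lt_IZR in H1. apply lt_IZR in H2.
      assert (m = 0%Z \/ m = (-1)%Z) as [->| ->] by lia; lra.
    + intros [[Hc _]|[_ [Hc|Hc]]]; [lia| |].
      * split; [|lra]. exists t, 0%Z. split. pose proof (Hb 1%nat ltac:(lia)). lra. lra.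
      * split; [|lra]. exists (t + 2 * PI), (-1)%Z. split.
        pose proof (Hb n ltac:(lia)). lra. lra.
  - rewrite !text_i by lia. replace (i + 1)%nat with (S i) by lia. split.
    + intros [[x [m [Hx ->]]] _]. left. split; [lia|].
      pose proof (Hb i ltac:(lia)). pose proof (Hb (S i) ltac:(lia)).
      assert (IZR m < 1).
      { apply Rmult_lt_reg_l with (2 * PI). lra. lra. }
      assert (-1 < IZR m).
      { apply Rmult_lt_reg_l with (2 * PI). lra. lra. }
      apply lt_IZR in H1. apply lt_IZR in H2.
      assert (m = 0%Z) as -> by lia; lra.
    + intros [[_ Hc]|[Hc _]]; [|lia].
      split; [|lra]. exists t, 0%Z. split. lra. lra.
Qed.

Lemma G_uniq n th i j t : Good n th -> (1 <= i <= n)%nat -> (1 <= j <= n)%nat ->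
  G n th i t -> G n th j t -> i = j.
Proof.
  intros HG Hi Hj H1 H2.
  destruct (Nat.eq_dec i j) as [|Hne]; [assumption|exfalso].
  destruct H1 as [[Hi' Hc1]|[-> Hc1]]; destruct H2 as [[Hj' Hc2]|[-> Hc2]].
  - destruct (Nat.lt_ge_cases i j).
    + pose proof (th_le n th HG (S i) j ltac:(lia) ltac:(lia) ltac:(lia)). lra.
    + pose proof (th_le n th HG (S j) i ltac:(lia) ltac:(lia) ltac:(lia)). lra.
  - pose proof (th_le n th HG (S i) n ltac:(lia) ltac:(lia) ltac:(lia)).
    pose proof (th_le n th HG 1 i ltac:(lia) ltac:(lia) ltac:(lia)). lra.
  - pose proof (th_le n th HG (S j) n ltac:(lia) ltac:(lia) ltac:(lia)).
    pose proof (th_le n th HG 1 j ltac:(lia) ltac:(lia) ltac:(lia)). lra.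
  - lia.
Qed.

Lemma G_theta n th i l : Good n th -> (1 <= i <= n)%nat -> (1 <= l <= n)%nat ->
  ~ G n th i (th l).
Proof.
  intros HG Hi Hl [[Hi' Hc]|[-> Hc]].
  - destruct (Nat.le_gt_cases l i).
    + pose proof (th_le n th HG l i ltac:(lia) ltac:(lia) ltac:(lia)). lra.
    + pose proof (th_le n th HG (S i) l ltac:(lia) ltac:(lia) ltac:(lia)). lra.
  - pose proof (th_le n th HG l n ltac:(lia) ltac:(lia) ltac:(lia)).
    pose proof (th_le n th HG 1 l ltac:(lia) ltac:(lia) ltac:(lia)). lra.
Qed.

Lemma G_iii n th i j u v : Good n th -> (1 <= i <= n)%nat -> (1 <= j <= n)%nat ->
  i <> j -> G n th i u -> G n th j v -> u < v ->
  (exists l, (1 <= l <= n)%nat /\ u < th l < v) /\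
  (exists l, (1 <= l <= n)%nat /\ ~ (u <= th l <= v)).
Proof.
  intros HG Hi Hj Hne H1 H2 Huv.
  destruct H1 as [[Hi' Hc1]|[-> Hc1]]; destruct H2 as [[Hj' Hc2]|[-> Hc2]].
  - split.
    + exists (S i). split; [lia|]. split; [lra|].
      destruct (Nat.lt_ge_cases i j).
      * pose proof (th_le n th HG (S i) j ltac:(lia) ltac:(lia) ltac:(lia)). lra.
      * pose proof (th_le n th HG (S j) i ltac:(lia) ltac:(lia) ltac:(lia)). lra.
    + exists i. split; [lia|]. lra.
  - split.
    + exists (S i). split; [lia|]. split; [lra|].
      pose proof (th_le n th HG (S i) n ltac:(lia) ltac:(lia) ltac:(lia)).
      pose proof (th_le n th HG 1 i ltac:(lia) ltac:(lia) ltac:(lia)). lra.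
    + exists i. split; [lia|]. lra.
  - pose proof (th_le n th HG (S j) n ltac:(lia) ltac:(lia) ltac:(lia)).
    pose proof (th_le n th HG 1 j ltac:(lia) ltac:(lia) ltac:(lia)).
    destruct Hc1 as [Hc1|Hc1]; [lra|]. split.
    + exists 1%nat. split; [lia|]. lra.
    + exists n. split; [lia|]. lra.
  - lia.
Qed.

Lemma G_noiii n th i u v : Good n th -> (1 <= i <= n)%nat ->
  G n th i u -> G n th i v -> u < v ->
  (exists l, (1 <= l <= n)%nat /\ u < th l < v) ->
  (exists l, (1 <= l <= n)%nat /\ ~ (u <= th l <= v)) -> False.
Proof.
  intros HG Hi H1 H2 Huv [l [Hl Hc]] [l' [Hl' Hc']].
  pose proof (th_le n th HG l n ltac:(lia) ltac:(lia) ltac:(lia)).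
  pose proof (th_le n th HG 1 l ltac:(lia) ltac:(lia) ltac:(lia)).
  pose proof (th_le n th HG l' n ltac:(lia) ltac:(lia) ltac:(lia)).
  pose proof (th_le n th HG 1 l' ltac:(lia) ltac:(lia) ltac:(lia)).
  destruct H1 as [[Hi' Hc1]|[-> Hc1]]; destruct H2 as [[Hx Hc2]|[Hx Hc2]]; try lia.
  - destruct (Nat.le_gt_cases l i).
    + pose proof (th_le n th HG l i ltac:(lia) ltac:(lia) ltac:(lia)). lra.
    + pose proof (th_le n th HG (S i) l ltac:(lia) ltac:(lia) ltac:(lia)). lra.
  - destruct Hc1; destruct Hc2; try lra; apply Hc'; split; lra.
Qed.

Lemma G_exists_aux n th t : Good n th -> th 1%nat < t ->
  forall m, (1 <= m <= n)%nat -> t < th m ->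
  (forall l, (1 <= l <= n)%nat -> t <> th l) ->
  exists i, (1 <= i < m)%nat /\ th i < t < th (S i).
Proof.
  intros HG H1. induction m; intros Hm Hlt Hne; [lia|].
  destruct (Nat.eq_dec m 0) as [->|Hm0]; [lra|].
  destruct (Rlt_or_le t (th m)) as [Hc|Hc].
  - destruct (IHm ltac:(lia) Hc Hne) as [i [Hi Hc']]. exists i. split; [lia|exact Hc'].
  - exists m. split; [lia|]. destruct Hc as [Hc|Hc]; [lra|]. exfalso; apply (Hne m); [lia|auto].
Qed.

Lemma G_exists n th t : Good n th -> 
  (forall l, (1 <= l <= n)%nat -> t <> th l) ->
  exists i, (1 <= i <= n)%nat /\ G n th i t.
Proof.
  intros HG Hne. pose proof HG as [H1 _].
  destruct (Rlt_or_le t (th 1%nat)) as [Hc|Hc].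
  { exists n. split; [lia|]. right. auto. }
  destruct (Rlt_or_le (th n) t) as [Hd|Hd].
  { exists n. split; [lia|]. right. auto. }
  assert (th 1%nat < t).
  { destruct Hc as [Hc|Hc]; [lra|]. exfalso; apply (Hne 1%nat); [lia|auto]. }
  assert (t < th n).
  { destruct Hd as [Hd|Hd]; [lra|]. exfalso; apply (Hne n); [lia|auto]. }
  destruct (G_exists_aux n th t HG H n ltac:(lia) H0 Hne) as [i [Hi Hc']].
  exists i. split; [lia|]. left. split; [lia|exact Hc'].
Qed.

Lemma Iarc_self x a : 0 <= a -> 0 <= x < 2 * PI -> Iarc x a x.
Proof. intros Ha Hx. split; [|lra]. exists x, 0%Z. split; lra. Qed.

Lemma Iarc_range x a t : Iarc x a t -> 0 <= t < 2 * PI.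
Proof. intros [_ H]. exact H. Qed.

Lemma J_G n th i a x t : Good n th -> (1 <= i <= n)%nat ->
  Jset n th i a x -> Iarc x a t -> G n th i t.
Proof.
  intros HG Hi [Hx HJ] Ht. pose proof (Iarc_range _ _ _ Ht).
  apply (proj1 (gap_iff n th i t HG Hi H)). apply HJ; auto.
Qed.

Lemma J_of_G n th i a y : Good n th -> (1 <= i <= n)%nat -> 0 <= y < 2 * PI ->
  0 < a < 2 * PI -> (forall l, (1 <= l <= n)%nat -> ~ Iarc y a (th l)) ->
  G n th i y -> Jset n th i a y.
Proof.
  intros HG Hi Hy Ha Hno HGy. split; [exact Hy|].
  intros t Ht. pose proof (Iarc_range _ _ _ Ht) as Htr.
  apply (proj2 (gap_iff n th i t HG Hi Htr)).
  destruct Ht as [[s [m [Hs ->]]] _].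
  pose proof (th_bnd n th HG) as Hb.
  assert (Hno0 : forall l, (1 <= l <= n)%nat -> ~ (y <= th l <= y + a)).
  { intros l Hl Hc. apply (Hno l Hl). split; [|pose proof (Hb l Hl); lra].
    exists (th l), 0%Z. split; [auto|lra]. }
  assert (Hno1 : forall l, (1 <= l <= n)%nat -> ~ (y <= th l + 2 * PI <= y + a)).
  { intros l Hl Hc. apply (Hno l Hl). split; [|pose proof (Hb l Hl); lra].
    exists (th l + 2 * PI), (-1)%Z. split; [auto|lra]. }
  destruct HGy as [[Hi' Hc]|[Hin [Hc|Hc]]].
  - assert (s < th (S i)).
    { destruct (Rlt_or_le s (th (S i))); auto. exfalso. apply (Hno0 (S i)); [lia|lra]. }
    apply (proj1 (gap_iff n th i _ HG Hi Htr)). split; [|lra].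
    rewrite !text_i by lia. replace (i + 1)%nat with (S i) by lia.
    exists s, m. split; [lra|reflexivity].
  - subst i. assert (s < th 1%nat + 2 * PI).
    { destruct (Rlt_or_le s (th 1%nat + 2 * PI)); auto. exfalso. pose proof (Hb 1%nat ltac:(lia)). apply (Hno1 1%nat); [lia|lra]. }
    apply (proj1 (gap_iff n th n _ HG Hi Htr)). split; [|lra].
    rewrite text_i by lia. rewrite text_n1.
    exists s, m. split; [lra|reflexivity].
  - subst i. assert (s < th 1%nat).
    { destruct (Rlt_or_le s (th 1%nat)); auto. exfalso. apply (Hno0 1%nat); [lia|lra]. }
    pose proof (Hb n ltac:(lia)).
    apply (proj1 (gap_iff n th n _ HG Hi Htr)). split; [|lra].
    rewrite text_i by lia. rewrite text_n1.
    exists (s + 2 * PI), (m - 1)%Z. split; [lra|]. rewrite minus_IZR. lra.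
Qed.

Theorem lemma3 (n : nat) (theta : nat -> R)
  (Hn : (1 <= n)%nat)
  (Hpos : 0 < theta 1%nat)
  (Hinc : forall j, (1 <= j < n)%nat -> theta j < theta (S j))
  (Htop : theta n < 2 * PI)
  (k : nat) (a y : nat -> R)
  (Ha : forall j, (1 <= j <= k)%nat -> 0 < a j < 2 * PI)
  (Hy : forall j, (1 <= j <= k)%nat -> 0 <= y j < 2 * PI) :
  Sigma n theta k a y <->
  ((forall l j, (1 <= l)%nat -> (l < j)%nat -> (j <= k)%nat ->
       forall t, ~ (Iarc (y l) (a l) t /\ Iarc (y j) (a j) t)) /\
   (forall j l, (1 <= j <= k)%nat -> (1 <= l <= n)%nat ->
       ~ Iarc (y j) (a j) (theta l)) /\
   (forall p q, (1 <= p <= k)%nat -> (1 <= q <= k)%nat -> y p < y q ->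
       (exists l, (1 <= l <= n)%nat /\ y p < theta l < y q) /\
       (exists l, (1 <= l <= n)%nat /\ ~ (y p <= theta l <= y q)))).
Proof.
  assert (HG : Good n theta) by (repeat split; auto).
  split.
  - intros [i [Hir [Hid HJ]]]. split; [|split].
    + intros l j Hl Hlj Hj t [H1 H2].
      apply (Hid l j ltac:(lia) ltac:(lia) ltac:(lia)).
      apply (G_uniq n theta _ _ t HG (Hir l ltac:(lia)) (Hir j ltac:(lia))).
      apply (J_G n theta _ (a l) (y l)); auto. apply Hir; lia. apply HJ; lia.
      apply (J_G n theta _ (a j) (y j)); auto. apply Hir; lia. apply HJ; lia.
    + intros j l Hj Hl Hc. apply (G_theta n theta (i j) l HG (Hir j Hj) Hl).
      apply (J_G n theta _ (a j) (y j)); auto.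
    + intros p q Hp Hq Hpq.
      apply (G_iii n theta (i p) (i q)); auto.
      apply Hid; auto. intros ->; lra.
      apply (J_G n theta _ (a p) (y p)); auto. apply Iarc_self; [left; apply Ha|apply Hy]; auto.
      apply (J_G n theta _ (a q) (y q)); auto. apply Iarc_self; [left; apply Ha|apply Hy]; auto.
  - intros [Hi1 [Hi2 Hi3]].
    assert (Hex : forall j, exists i, (1 <= j <= k)%nat -> (1 <= i <= n)%nat /\ G n theta i (y j)).
    { intros j. destruct (le_lt_dec 1 j) as [H1|H1]; [destruct (le_lt_dec j k) as [H2|H2]|].
      - destruct (G_exists n theta (y j) HG) as [i Hi].
        { intros l Hl Heq. apply (Hi2 j l ltac:(lia) Hl). rewrite <- Heq.
          apply Iarc_self; [left; apply Ha|apply Hy]; lia. }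
        exists i. auto.
      - exists 0%nat. lia.
      - exists 0%nat. lia. }
    set (i := fun j => proj1_sig (constructive_indefinite_description _ (Hex j))).
    assert (Hi : forall j, (1 <= j <= k)%nat -> (1 <= i j <= n)%nat /\ G n theta (i j) (y j)).
    { intros j. unfold i. destruct (constructive_indefinite_description _ (Hex j)). auto. }
    exists i. split; [|split].
    + intros j Hj. apply Hi; auto.
    + intros p q Hp Hq Hne Heq.
      destruct (Hi p Hp) as [Hpr Hp']. destruct (Hi q Hq) as [Hqr Hq'].
      rewrite Heq in Hp'.
      destruct (Rtotal_order (y p) (y q)) as [Hlt|[Heqy|Hgt]].
      * destruct (Hi3 p q Hp Hq Hlt).
        exact (G_noiii n theta (i q) (y p) (y q) HG Hqr Hp' Hq' Hlt H H0).
      * assert (Hs1 : Iarc (y p) (a p) (y p)) by (apply Iarc_self; [left; apply Ha|apply Hy]; lia).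
        assert (Hs2 : Iarc (y q) (a q) (y p)) by (rewrite Heqy; apply Iarc_self; [left; apply Ha|apply Hy]; lia).
        destruct (Nat.lt_gt_cases p q) as [[Hc|Hc] _]; [exact Hne| |].
        -- exact (Hi1 p q ltac:(lia) Hc ltac:(lia) (y p) (conj Hs1 Hs2)).
        -- exact (Hi1 q p ltac:(lia) Hc ltac:(lia) (y p) (conj Hs2 Hs1)).
      * destruct (Hi3 q p Hq Hp Hgt).
        exact (G_noiii n theta (i q) (y q) (y p) HG Hqr Hq' Hp' Hgt H H0).
    + intros j Hj. destruct (Hi j Hj) as [Hr Hg].
      apply J_of_G; auto.
Qed.
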